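(* Let $m,n\ge1$, $1\le r\le mn$, $\mathcal{B}=\mathcal{B}(m,n;r)$ with symmetry group $G$, and fix a division of the grid cells into labelled regions such that every element of $G$ maps each region onto a region (board partitions being taken with respect to it). Suppose $\overline{\mathcal{B}}\subseteq\mathcal{B}$ satisfies: (1) $\overline{\mathcal{B}}$ is a disjoint union of sets $\pi_1,\dots,\pi_t$, each $\pi_i$ being the set of all boards in $\mathcal{B}$ with some fixed board partition; (2) every board of $\mathcal{B}$ is equivalent under $G$ to some board of $\overline{\mathcal{B}}$; (3) any two boards of $\overline{\mathcal{B}}$ that are equivalent under $G$ have the same board partition. Let $K_i=\{g\in G:g\cdot\pi_i=\pi_i\}$. Fix a tiling problem, and for each $i$ let $S_i\subseteq\pi_i$ be the set of boards in $\pi_i$ for which this tiling problem is solvable. Then the total number of boards in $\mathcal{B}(m,n;r)$ for which the tiling problem is solvable is \[\sum_{i=1}^t|S_i|\cdot[G:K_i].\]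
   Context: A grid has $m$ rows and $n$ columns of unit square cells; $\mathcal{B}(m,n;r)$ is the set of all boards, i.e. choices of exactly $r$ blocked cells. Symmetries of the rectangle act on boards; the symmetry group $G$ is $D_4$ (all 8 rotations and reflections of the square) if $m=n>1$, $\langle H,V\rangle=\{R_0,H,V,R_{180}\}$ (identity, reflections across the horizontal and vertical midlines, 180-degree rotation) if $m\neq n$ and $m,n>1$, and $\langle R_{180}\rangle$ if exactly one of $m,n$ is 1. Boards $B,B'$ are equivalent under $G$ if $g\cdot B=B'$ for some $g\in G$. Given a division of the grid into labelled regions, the board partition of a board is the tuple of numbers of blocked cells in each region. A polyomino is a shape made of finitely many edge-connected unit squares; a free polyomino may be rotated and reflected. A tiling problem consists of a prescribed list of free polyominoes whose total number of squares is $mn-r$; a board is solvable for it if the unblocked cells can be exactly covered, without gaps or overlaps, by placing each listed polyomino (in any rotation/reflection) once. *)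

(* Defs.v *)
From HB Require Import structures.
From mathcomp Require Import all_boot all_order all_algebra.
From Stdlib Require Import ClassicalEpsilon.
Set Implicit Arguments. Unset Strict Implicit. Unset Printing Implicit Defensive.
Import Order.TTheory GRing.Theory Num.Theory.

Inductive sym := R0 | R90 | R180 | R270 | H | V | D | A.

Definition sym_to_ord (s : sym) : 'I_8 :=
  match s with R0 => @Ordinal 8 0 isT | R90 => @Ordinal 8 1 isT
  | R180 => @Ordinal 8 2 isT | R270 => @Ordinal 8 3 isT
  | H => @Ordinal 8 4 isT | V => @Ordinal 8 5 isT
  | D => @Ordinal 8 6 isT | A => @Ordinal 8 7 isT end.
Definition ord_to_sym (o : 'I_8) : option sym :=
  Some (match val o with 0 => R0 | 1 => R90 | 2 => R180 | 3 => R270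
                       | 4 => H | 5 => V | 6 => D | _ => A end)%N.
Lemma sym_to_ordK : pcancel sym_to_ord ord_to_sym.
Proof. move=> s; case: s; reflexivity. Qed.
HB.instance Definition _ := Finite.copy sym (pcan_type sym_to_ordK).

(* cells of the m x n grid: (row, column) *)
Notation cell m n := ('I_m * 'I_n)%type.

Definition ordd k (d : 'I_k) (x : nat) : 'I_k := insubd d x.

(* Action of a symmetry on the cells (rotations/diagonal reflections are only
   used when m = n, where these formulas are the genuine ones). *)
Definition act m n (g : sym) (c : cell m n) : cell m n :=
  let i := c.1 in let j := c.2 in
  match g with
  | R0 => c
  | R90 => (ordd i j, ordd j (m.-1 - i))
  | R180 => (ordd i (m.-1 - i), ordd j (n.-1 - j))
  | R270 => (ordd i (n.-1 - j), ordd j i)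
  | H => (ordd i (m.-1 - i), j)
  | V => (i, ordd j (n.-1 - j))
  | D => (ordd i j, ordd j i)
  | A => (ordd i (n.-1 - j), ordd j (m.-1 - i))
  end.

Definition symG (m n : nat) : {set sym} :=
  if (m == n) && (1 < m)%N then [set: sym]
  else if (1 < m)%N && (1 < n)%N then [set R0; H; V; R180]
  else [set R0; R180].

(* boards: sets of exactly r blocked cells *)
Definition boards m n r : {set {set cell m n}} := [set B : {set cell m n} | #|B| == r].

Definition bact m n (g : sym) (B : {set cell m n}) : {set cell m n} :=
  [set act g c | c in B].

Definition region m n k (reg : cell m n -> 'I_k) (a : 'I_k) : {set cell m n} :=
  [set c | reg c == a].

Definition regions_respected m n k (reg : cell m n -> 'I_k) : Prop :=
  forall g, g \in symG m n -> forall a : 'I_k,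
    exists b : 'I_k, bact g (region reg a) = region reg b.

Definition bpart m n k (reg : cell m n -> 'I_k) (B : {set cell m n}) : {ffun 'I_k -> nat} :=
  [ffun a => #|B :&: region reg a|].

Definition piset m n r k (reg : cell m n -> 'I_k) (p : {ffun 'I_k -> nat})
  : {set {set cell m n}} := [set B in boards m n r | bpart reg B == p].

Definition stabK m n (P : {set {set cell m n}}) : {set sym} :=
  [set g in symG m n | [set bact g B | B in P] == P].
Definition index_in (G K : {set sym}) : nat := (#|G| %/ #|K|)%N.

Definition zcell := (int * int)%type.

Definition adjz (x y : zcell) : bool :=
  ((`|x.1 - y.1| + `|x.2 - y.2|)%R == 1%R).

Definition polyomino (P : seq zcell) : Prop :=
  P != [::] /\ uniq P /\
  (forall X : zcell -> Prop,
     (exists2 x, x \in P & X x) ->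
     (forall x y, x \in P -> y \in P -> adjz x y -> X x -> X y) ->
     forall x, x \in P -> X x).

Definition transz (s : sym) (z : zcell) : zcell :=
  let x := z.1 in let y := z.2 in
  match s with
  | R0 => (x, y) | R90 => (- y, x)%R | R180 => (- x, - y)%R | R270 => (y, - x)%R
  | H => (x, - y)%R | V => (- x, y)%R | D => (y, x) | A => (- y, - x)%R
  end.

Definition place (s : sym) (d : zcell) (P : seq zcell) : seq zcell :=
  map (fun z => let w := transz s z in (w.1 + d.1, w.2 + d.2)%R) P.

Definition cellZ m n (c : cell m n) : zcell := (Posz (val c.1), Posz (val c.2)).

(* board B is solvable for the tiling problem Ps: each listed polyomino is
   placed once (rotated/reflected and translated), without overlaps, covering
   exactly the unblocked cells. *)
Definition solvable m n (Ps : seq (seq zcell)) (B : {set cell m n}) : Prop :=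
  exists pl : seq (sym * zcell),
    size pl = size Ps /\
    let cells := flatten (map (fun xp => place xp.1.1 xp.1.2 xp.2) (zip pl Ps)) in
    uniq cells /\
    (forall z, z \in cells <-> exists c, c \notin B /\ z = cellZ c).

Definition solvableb m n (Ps : seq (seq zcell)) (B : {set cell m n}) : bool :=
  if excluded_middle_informative (solvable Ps B) then true else false.

(* Main.v *)
Require Import Defs.
From HB Require Import structures.
From mathcomp Require Import all_boot all_order all_algebra.
From mathcomp Require Import zify.
From Stdlib Require Import ClassicalEpsilon.
Import Order.TTheory GRing.Theory Num.Theory.
Set Implicit Arguments. Unset Strict Implicit. Unset Printing Implicit Defensive.
Definition smul (g h : sym) : sym :=
  match g, h with
  | R0, R0 => R0
  | R0, R90 => R90
  | R0, R180 => R180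
  | R0, R270 => R270
  | R0, H => H
  | R0, V => V
  | R0, D => D
  | R0, A => A
  | R90, R0 => R90
  | R90, R90 => R180
  | R90, R180 => R270
  | R90, R270 => R0
  | R90, H => D
  | R90, V => A
  | R90, D => V
  | R90, A => H
  | R180, R0 => R180
  | R180, R90 => R270
  | R180, R180 => R0
  | R180, R270 => R90
  | R180, H => V
  | R180, V => H
  | R180, D => A
  | R180, A => D
  | R270, R0 => R270
  | R270, R90 => R0
  | R270, R180 => R90
  | R270, R270 => R180
  | R270, H => A
  | R270, V => D
  | R270, D => H
  | R270, A => V
  | H, R0 => H
  | H, R90 => A
  | H, R180 => V
  | H, R270 => D
  | H, H => R0
  | H, V => R180
  | H, D => R270
  | H, A => R90
  | V, R0 => V
  | V, R90 => D
  | V, R180 => H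
  | V, R270 => A
  | V, H => R180
  | V, V => R0
  | V, D => R90
  | V, A => R270
  | D, R0 => D
  | D, R90 => H
  | D, R180 => A
  | D, R270 => V
  | D, H => R90
  | D, V => R270
  | D, D => R0
  | D, A => R180
  | A, R0 => A
  | A, R90 => V
  | A, R180 => D
  | A, R270 => H
  | A, H => R270
  | A, V => R90
  | A, D => R180
  | A, A => R0
  end.
Definition sinv (g : sym) : sym := match g with
  | R0 => R0
  | R90 => R270
  | R180 => R180
  | R270 => R90
  | H => H
  | V => V
  | D => D
  | A => A
  end.

Lemma val_ordd k (d : 'I_k) x : val (ordd d x) = if (x < k)%N then x else nat_of_ord d.
Proof. by rewrite /ordd val_insubd. Qed.
Lemma val_ordd' k (d : 'I_k) x : nat_of_ord (ordd d x) = if (x < k)%N then x else nat_of_ord d.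
Proof. by rewrite /ordd val_insubd. Qed.

Ltac solve_ord := rewrite ?val_ordd ?val_ordd';
  have := ltn_ord i; have := ltn_ord j;
  repeat match goal with
  | |- context [if ?b then _ else _] => let E := fresh "E" in destruct b eqn:E
  | H : context [if ?b then _ else _] |- _ => let E := fresh "E" in destruct b eqn:E
  end; lia.

Lemma act_mul m n g h (c : cell m n) : g \in symG m n -> h \in symG m n ->
  act (smul g h) c = act g (act h c).
Proof.
rewrite /symG; case: (eqVneq m n) => [e|ne].
  subst n; rewrite /=; case: c => i j.
  case: ifP => m1.
    move=> _ _; case: g; case: h; rewrite /act /=; congr pair; apply: val_inj; rewrite /=; solve_ord.
  rewrite m1; case: g; case: h; rewrite !inE //= => _ _; congr pair; apply: val_inj; rewrite /=; solve_ord.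
rewrite /=; case: c => i j.
case: ifP => m2; case: g; case: h; rewrite !inE //= => _ _; congr pair; apply: val_inj; rewrite /=; solve_ord.
Qed.

Definition tcomp (g h : sym) : sym :=
  match g, h with
  | R0, R0 => R0
  | R0, R90 => R90
  | R0, R180 => R180
  | R0, R270 => R270
  | R0, H => H
  | R0, V => V
  | R0, D => D
  | R0, A => A
  | R90, R0 => R90
  | R90, R90 => R180
  | R90, R180 => R270
  | R90, R270 => R0
  | R90, H => D
  | R90, V => A
  | R90, D => V
  | R90, A => H
  | R180, R0 => R180
  | R180, R90 => R270
  | R180, R180 => R0
  | R180, R270 => R90
  | R180, H => V
  | R180, V => H
  | R180, D => A
  | R180, A => D
  | R270, R0 => R270
  | R270, R90 => R0
  | R270, R180 => R90
  | R270, R270 => R180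
  | R270, H => A
  | R270, V => D
  | R270, D => H
  | R270, A => V
  | H, R0 => H
  | H, R90 => A
  | H, R180 => V
  | H, R270 => D
  | H, H => R0
  | H, V => R180
  | H, D => R270
  | H, A => R90
  | V, R0 => V
  | V, R90 => D
  | V, R180 => H
  | V, R270 => A
  | V, H => R180
  | V, V => R0
  | V, D => R90
  | V, A => R270
  | D, R0 => D
  | D, R90 => H
  | D, R180 => A
  | D, R270 => V
  | D, H => R90
  | D, V => R270
  | D, D => R0
  | D, A => R180
  | A, R0 => A
  | A, R90 => V
  | A, R180 => D
  | A, R270 => H
  | A, H => R270
  | A, V => R90
  | A, D => R180
  | A, A => R0
  end.

Ltac memG m n := rewrite /symG; case: (eqVneq m n) => [e|ne];
  [subst n; rewrite /=; case: ifP => [_|->] | rewrite /=; case: ifP => _];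
  idtac.

Lemma smul_in m n g h : g \in symG m n -> h \in symG m n -> smul g h \in symG m n.
Proof. memG m n; case: g; case: h; rewrite ?inE //=. Qed.

Lemma sinv_in m n g : g \in symG m n -> sinv g \in symG m n.
Proof. memG m n; case: g; rewrite ?inE //=. Qed.

Lemma R0_in m n : R0 \in symG m n.
Proof. rewrite /symG; case: ifP => _; rewrite ?inE //; case: ifP => _; rewrite !inE //. Qed.

Lemma smulA g h k : smul g (smul h k) = smul (smul g h) k.
Proof. by case: g; case: h; case: k. Qed.
Lemma smulVg g : smul (sinv g) g = R0. Proof. by case: g. Qed.
Lemma smulgV g : smul g (sinv g) = R0. Proof. by case: g. Qed.
Lemma smul1g g : smul R0 g = g. Proof. by case: g. Qed.
Lemma smulKV g k : smul (sinv g) (smul g k) = k. Proof. by case: g; case: k. Qed.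

Lemma act_R0 m n (c : cell m n) : act R0 c = c. Proof. by case: c. Qed.

Lemma actK m n g (c : cell m n) : g \in symG m n -> act (sinv g) (act g c) = c.
Proof. move=> gG; by rewrite -act_mul ?sinv_in // smulVg act_R0. Qed.
Lemma actKV m n g (c : cell m n) : g \in symG m n -> act g (act (sinv g) c) = c.
Proof. move=> gG; by rewrite -act_mul ?sinv_in // smulgV act_R0. Qed.
Lemma act_inj m n g : g \in symG m n -> injective (@act m n g).
Proof. move=> gG; exact: can_inj (fun c => actK c gG). Qed.

Lemma transz_comp l s z : transz (tcomp l s) z = transz l (transz s z).
Proof. case: z => a b; case: l; case: s; rewrite /= ?opprK //. Qed.

Definition Fz (s : sym) (d z : zcell) : zcell := let w := transz s z in (w.1 + d.1, w.2 + d.2)%R.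

Lemma transz_inj s : injective (transz s).
Proof. move=> [a b] [c d]; case: s; rewrite /= => -[h1 h2]; congr pair; lia. Qed.

Definition lin (g : sym) : sym :=
  match g with R0 => R0 | R90 => R270 | R180 => R180 | R270 => R90
  | H => V | V => H | D => D | A => A end.
Definition eoff (m n : nat) (g : sym) : zcell :=
  match g with
  | R0 => (0, 0)%R | R90 => (0%R, Posz m.-1) | R180 => (Posz m.-1, Posz n.-1)
  | R270 => (Posz n.-1, 0%R) | H => (Posz m.-1, 0%R) | V => (0%R, Posz n.-1)
  | D => (0, 0)%R | A => (Posz n.-1, Posz m.-1) end.

Lemma cellZ_act m n g (c : cell m n) : g \in symG m n ->
  cellZ (act g c) = Fz (lin g) (eoff m n g) (cellZ c).
Proof.
rewrite /symG; case: (eqVneq m n) => [e|ne].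
  subst n; rewrite /=; case: c => i j.
  case: ifP => m1.
    move=> _; case: g; rewrite /act /cellZ /Fz /=; congr pair; solve_ord.
  rewrite m1; case: g; rewrite !inE //= => _; rewrite /act /cellZ /Fz /=; congr pair; solve_ord.
rewrite /=; case: c => i j.
case: ifP => m2; case: g; rewrite !inE //= => _; rewrite /act /cellZ /Fz /=; congr pair; solve_ord.
Qed.

Lemma Fz_comp l e s d z : Fz l e (Fz s d z) = Fz (tcomp l s) (Fz l e d) z.
Proof.
rewrite /Fz transz_comp; move: (transz s z) => w.
case: w => a b; case: d => c d; case: e => e1 e2; case: l; rewrite /=; congr pair; lia.
Qed.

Lemma Fz_inj l e : injective (Fz l e).
Proof.
move=> z1 z2; rewrite /Fz => -[h1 h2]; apply: (@transz_inj l).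
move: h1 h2; case: (transz l z1) => a b; case: (transz l z2) => c d /= h1 h2.
congr pair; lia.
Qed.

Lemma cells_map l e (pl : seq (sym * zcell)) (Ps : seq (seq zcell)) :
 flatten (map (fun xp => place xp.1.1 xp.1.2 xp.2)
   (zip (map (fun x => (tcomp l x.1, Fz l e x.2)) pl) Ps))
 = map (Fz l e) (flatten (map (fun xp => place xp.1.1 xp.1.2 xp.2) (zip pl Ps))).
Proof.
elim: pl Ps => [|[s d] pl IH] [|P Ps] //=.
rewrite map_cat IH; congr (_ ++ _).
rewrite /place -map_comp; apply: eq_map => z /=.
exact: (esym (Fz_comp l e s d z)).
Qed.

Lemma solvable_act m n Ps g (B : {set cell m n}) : g \in symG m n ->
  solvable Ps B -> solvable Ps (bact g B).
Proof.
move=> gG [pl [Hs [Hu Hm]]].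
exists (map (fun x => (tcomp (lin g) x.1, Fz (lin g) (eoff m n g) x.2)) pl).
split; first by rewrite size_map.
rewrite /= cells_map; split.
  by rewrite map_inj_uniq //; exact: Fz_inj.
move=> z; split.
  case/mapP => w wc ->. have [c [cB ->]] := (Hm w).1 wc.
  exists (act g c); split; last by rewrite cellZ_act.
  apply/negP => /imsetP [c' c'B /(act_inj gG) eq].
  by move: cB; rewrite eq c'B.
case=> c' [c'n ->].
have ->: c' = act g (act (sinv g) c') by rewrite actKV.
rewrite cellZ_act //; apply: map_f; apply/(Hm _).2; exists (act (sinv g) c'); split => //.
apply/negP => cB; move/negP: c'n; apply.
rewrite -[c'](actKV c' gG); exact: imset_f.
Qed.

Section B.
Variables m n : nat.
Implicit Types B : {set cell m n}.

Lemma bact_mul g h B : g \in symG m n -> h \in symG m n ->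
  bact (smul g h) B = bact g (bact h B).
Proof. move=> gG hG; rewrite /bact -imset_comp; apply: eq_imset => c /=; exact: act_mul. Qed.

Lemma bact_R0 B : bact R0 B = B.
Proof. rewrite /bact (eq_imset _ (@act_R0 m n)); exact: imset_id. Qed.

Lemma bactK g B : g \in symG m n -> bact (sinv g) (bact g B) = B.
Proof. by move=> gG; rewrite -bact_mul ?sinv_in // smulVg bact_R0. Qed.
Lemma bactKV g B : g \in symG m n -> bact g (bact (sinv g) B) = B.
Proof. by move=> gG; rewrite -bact_mul ?sinv_in // smulgV bact_R0. Qed.
Lemma bact_inj g : g \in symG m n -> injective (@bact m n g).
Proof. move=> gG; exact: can_inj (fun B => bactK B gG). Qed.
Lemma card_bact g B : g \in symG m n -> #|bact g B| = #|B|.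
Proof. move=> gG; rewrite card_imset //; exact: act_inj. Qed.
Lemma bact_boards r g B : g \in symG m n -> B \in boards m n r -> bact g B \in boards m n r.
Proof. by move=> gG; rewrite !inE card_bact. Qed.

Lemma solvableP Ps B : reflect (solvable Ps B) (solvableb Ps B).
Proof. rewrite /solvableb; case: excluded_middle_informative => h; constructor => //. Qed.

Lemma solvableb_act Ps g B : g \in symG m n -> solvableb Ps (bact g B) = solvableb Ps B.
Proof.
move=> gG; apply/solvableP/solvableP => h; last exact: solvable_act.
rewrite -(bactK B gG); apply: solvable_act => //; exact: sinv_in.
Qed.

Lemma bpart_bact k (reg : cell m n -> 'I_k) g B B' : regions_respected reg -> g \in symG m n ->
  bpart reg B = bpart reg B' -> bpart reg (bact g B) = bpart reg (bact g B').
Proof.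
move=> RR gG EB; apply/ffunP => b; rewrite !ffunE.
have [a Ea] := RR _ (sinv_in gG) b.
have Eb : region reg b = bact g (region reg a) by rewrite -Ea bactKV.
have inj : {in B & region reg a, injective (act g)} by move=> x y _ _; exact: act_inj.
have inj' : {in B' & region reg a, injective (act g)} by move=> x y _ _; exact: act_inj.
rewrite Eb /bact -imsetI // -imsetI // !card_imset; try exact: act_inj.
by have := congr1 (fun f : {ffun 'I_k -> nat} => f a) EB; rewrite !ffunE.
Qed.
End B.

Notation orb P g := [set bact g B | B in P].

Section C.
Variables m n : nat.

Lemma orb_mul (P : {set {set cell m n}}) g h : g \in symG m n -> h \in symG m n ->
  orb P (smul g h) = orb (orb P h) g.
Proof. move=> gG hG; rewrite -imset_comp; apply: eq_imset => B /=; exact: bact_mul. Qed.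

Lemma orb_R0 (P : {set {set cell m n}}) : orb P R0 = P.
Proof. rewrite (eq_imset _ (@bact_R0 m n)); exact: imset_id. Qed.

Lemma orbit_stab (P : {set {set cell m n}}) :
  (#|[set orb P g | g in symG m n]| * #|stabK P| = #|symG m n|)%N.
Proof.
rewrite -[#|symG m n|]sum1_card (partition_big_imset (fun g => orb P g)) /=.
rewrite -sum_nat_const; apply: eq_bigr => _ /imsetP[g0 g0G ->].
have -> : (\sum_(g in symG m n | orb P g == orb P g0) 1 =
   #|[set g in symG m n | orb P g == orb P g0]|)%N.
  by rewrite -sum1_card; apply: eq_bigl => g; rewrite inE.
rewrite (_ : [set g in symG m n | _] = [set smul g0 kk | kk in stabK P]).
  by rewrite card_imset //; exact: (can_inj (smulKV g0)).
apply/setP => h; rewrite inE; apply/andP/imsetP.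
  case=> hG /eqP E; exists (smul (sinv g0) h); last by rewrite smulA smulgV smul1g.
  rewrite inE smul_in ?sinv_in //= orb_mul ?sinv_in // E -orb_mul ?sinv_in //.
  by rewrite smulVg orb_R0.
case=> kk; rewrite inE => /andP[kG /eqP Ek] ->; split; first exact: smul_in.
by rewrite orb_mul // Ek.
Qed.

Variables (r k : nat) (reg : cell m n -> 'I_k).
Hypothesis RR : regions_respected reg.

Lemma stab_sub q g B1 : g \in symG m n -> B1 \in piset r reg q ->
  bact g B1 \in piset r reg q -> forall B, B \in piset r reg q -> bact g B \in piset r reg q.
Proof.
move=> gG H1 H2 B HB; move: H1 H2 HB; rewrite !inE => /andP[_ /eqP E1] /andP[_ /eqP E2] /andP[Bb /eqP EB].
rewrite card_bact // Bb /= (bpart_bact RR gG (_ : bpart reg B = bpart reg B1)) ?E2 //.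
by rewrite EB E1.
Qed.

Lemma stab_eq q g B1 : g \in symG m n -> B1 \in piset r reg q ->
  bact g B1 \in piset r reg q -> orb (piset r reg q) g = piset r reg q.
Proof.
move=> gG B1i B2i; apply/eqP; rewrite eqEsubset; apply/andP; split.
  apply/subsetP => _ /imsetP[B' B'i ->]; exact: (stab_sub gG B1i B2i).
apply/subsetP => B'' B''i; rewrite -(bactKV B'' gG); apply: imset_f.
apply: (stab_sub (sinv_in gG) B2i) => //; by rewrite bactK.
Qed.
End C.

Unset Implicit Arguments.

Theorem corollary3p2 (m n r k t : nat) (reg : 'I_m * 'I_n -> 'I_k)
  (Bbar : {set {set 'I_m * 'I_n}}) (p : 'I_t -> {ffun 'I_k -> nat})
  (Ps : seq (seq zcell)) :
  (0 < m)%N -> (0 < n)%N -> (1 <= r <= m * n)%N ->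
  regions_respected reg ->
  Bbar \subset boards m n r ->
  Bbar = \bigcup_(i < t) piset r reg (p i) ->
  (forall i j : 'I_t, i != j ->
     [disjoint piset r reg (p i) & piset r reg (p j)]) ->
  (forall B, B \in boards m n r -> exists2 g, g \in symG m n & bact g B \in Bbar) ->
  (forall B B', B \in Bbar -> B' \in Bbar ->
     (exists2 g, g \in symG m n & bact g B = B') -> bpart reg B = bpart reg B') ->
  (forall P, P \in Ps -> polyomino P) ->
  sumn (map size Ps) = (m * n - r)%N ->
  #|[set B in boards m n r | solvableb Ps B]| =
  (\sum_(i < t) #|[set B in piset r reg (p i) | solvableb Ps B]|
       * index_in (symG m n) (stabK (piset r reg (p i))))%N.
Proof.
move=> _ _ _ RR _ EBbar Hdisj Hex Hsame _ _.
set G := symG m n.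
set Sol := [set B in boards m n r | solvableb Ps B].
pose pi i := piset r reg (p i).
pose T i := [set orb (pi i) g | g in G].
have inpi i B : B \in pi i -> (B \in boards m n r) /\ bpart reg B = p i.
  by rewrite /pi /piset inE => /andP[-> /eqP].
have inBbar i B : B \in pi i -> B \in Bbar.
  by move=> Bi; rewrite EBbar; apply/bigcupP; exists i.
have Huniq i j g h B : g \in G -> h \in G -> B \in orb (pi i) g -> B \in orb (pi j) h ->
    i = j /\ orb (pi i) g = orb (pi j) h.
  move=> gG hG /imsetP[B1 B1i ->] /imsetP[B2 B2j E].
  set kk := smul (sinv h) g.
  have kG : kk \in G by rewrite smul_in ?sinv_in.
  have Ek : bact kk B1 = B2 by rewrite bact_mul ?sinv_in // E bactK.
  have Ep : p i = p j.
    have := Hsame B1 B2 (inBbar _ _ B1i) (inBbar _ _ B2j) (ex_intro2 _ _ kk kG Ek).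
    by rewrite (inpi _ _ B1i).2 (inpi _ _ B2j).2.
  have eij : i = j.
    case: (eqVneq i j) => // ne; have := Hdisj i j ne.
    rewrite Ep => /disjoint_setI0; rewrite setIid => E0.
    by move: B2j; rewrite /pi E0 inE.
  subst j; split => //.
  have Hs : orb (pi i) kk = pi i by apply: (stab_eq RR kG B1i); rewrite Ek.
  have -> : g = smul h kk by rewrite /kk smulA smulgV smul1g.
  by rewrite orb_mul // Hs.
have Hexist B : B \in boards m n r -> exists i, exists2 g, g \in G & B \in orb (pi i) g.
  case/Hex => g gG; rewrite EBbar => /bigcupP[i _ Hi].
  exists i; exists (sinv g); first exact: sinv_in.
  by rewrite -{1}(bactK B gG); apply: imset_f.
have Hcount i g : g \in G -> #|Sol :&: orb (pi i) g| = #|[set B in pi i | solvableb Ps B]|.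
  move=> gG; rewrite -[RHS](card_imset _ (bact_inj gG)); apply: eq_card => B; apply/idP/idP.
    rewrite !inE => /andP[/andP[Bb Bs] /imsetP[B1 B1i EB]].
    apply/imsetP; exists B1 => //; rewrite inE B1i /=.
    by rewrite -(solvableb_act _ _ gG) -EB.
  case/imsetP => B1; rewrite inE => /andP[B1i B1s] ->.
  have := (inpi _ _ B1i).1; rewrite inE => Bb.
  rewrite !inE card_bact // Bb solvableb_act // B1s /=.
  exact: imset_f.
have Hidx i : index_in G (stabK (pi i)) = #|T i|.
  rewrite /index_in -(orbit_stab (pi i)) mulnK //.
  by apply/card_gt0P; exists R0; rewrite inE R0_in orb_R0 eqxx.
have Hcard X : #|Sol :&: X| = (\sum_(B in Sol) (B \in X : nat))%N.
  rewrite -sum1_card (eq_bigl (fun B => (B \in Sol) && (B \in X))); last by move=> B; rewrite inE.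
  rewrite big_mkcondr /=; apply: eq_bigr => B _; by case: (B \in X).
rewrite (eq_bigr (fun i => \sum_(X in T i) #|Sol :&: X|))%N; last first.
  move=> i _; rewrite Hidx [LHS]mulnC -sum_nat_const; apply: eq_bigr => X /imsetP[g gG ->].
  by rewrite Hcount.
rewrite (eq_bigr (fun i => \sum_(B in Sol) \sum_(X in T i) (B \in X : nat)))%N; last first.
  by move=> i _; rewrite (eq_bigr _ (fun X _ => Hcard X)) exchange_big.
rewrite exchange_big /= -sum1_card; apply: eq_bigr => B BSol.
have Bb : B \in boards m n r by move: BSol; rewrite inE => /andP[].
have [i0 [g0 g0G Bin]] := Hexist B Bb.
rewrite (bigD1 i0) //= (bigD1 (orb (pi i0) g0)) /=; last by apply: imset_f.
have Z1 : (\sum_(X in T i0 | X != orb (pi i0) g0) (B \in X : nat))%N = 0%N.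
  apply: big1 => X /andP[/imsetP[g gG ->] ne].
  have BX : B \notin orb (pi i0) g.
    apply/negP => BX; have [_ E] := Huniq _ _ _ _ _ gG g0G BX Bin.
    by rewrite E eqxx in ne.
  by rewrite (negbTE BX).
have Z2 : (\sum_(i < t | i != i0) \sum_(X in T i) (B \in X : nat))%N = 0%N.
  apply: big1 => i ne; apply: big1 => X /imsetP[g gG ->].
  have BX : B \notin orb (pi i) g.
    apply/negP => BX; have [E _] := Huniq _ _ _ _ _ gG g0G BX Bin.
    by rewrite E eqxx in ne.
  by rewrite (negbTE BX).
by rewrite Z1 Z2 Bin.
Qed.
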